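(* Let $b\ge1$, $g=4b^2$, and let $D$ be a digraph with directed girth at least $g$ such that for every arc $(x,y)\in A(D)$, either $D$ contains a directed cycle of length exactly $g$ through $(x,y)$, or there is $z\in V(D)\setminus\{x,y\}$ with $(z,x),(z,y)\in A(D)$. Then for every $(p,q)\in A(D)$ there is a gadget $G$ contained in $D$ which is either of type I or an extended gadget of type II, with $p(G)=p$, $q(G)=q$ and $|V(G)|\le 2g$.
   Context: Digraphs are finite, loopless, without parallel arcs (digons allowed); the directed girth is the minimum length of a directed cycle. Gadgets have designated vertices $p,q$ with arc $(p,q)$. Type I: a directed cycle of length at least $g$ through $(p,q)$. Basic type II: vertices $p,q,r$ and a directed path $P_1$ from $r$ to $p$ of length at least $2b^2+b-2$ with $q\notin V(P_1)$, every vertex of $P_1$ having an arc to $q$. Extended type II: a basic type-II gadget plus a directed path $P_2$ of length at least $b$ whose last vertex is $r$, with $V(P_1)\cap V(P_2)=\{r\}$, $q\notin V(P_2)$, and either an arc from the first vertex of $P_2$ to the second vertex of $P_1$, or an arc from some vertex of $V(P_1)\setminus\{r\}$ to the first vertex of $P_2$. *)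

(* Defs.v *)
(* A digraph is a finite vertex type T with an arc relation
   a : rel T (no parallel arcs automatically; digons allowed). *)
From mathcomp Require Import all_boot.
Set Implicit Arguments. Unset Strict Implicit. Unset Printing Implicit Defensive.

Section Digraphs.
Variables (T : finType) (a : rel T).

Definition loopless : Prop := forall x, ~~ a x x.

Definition dicycle (c : seq T) : bool := [&& c != [::], uniq c & cycle a c].

Definition girth_ge (g : nat) : Prop :=
  forall c, dicycle c -> g <= size c.

Definition cycle_through (x y : T) (s : seq T) : bool := dicycle (x :: y :: s).

(* A directed path given as x :: s : distinct vertices, arcs between consecutive
   vertices; first vertex x, last vertex last x s, length size s. *)
Definition dipath (x : T) (s : seq T) : bool := uniq (x :: s) && path a x s.

Definition gadgetI (g n : nat) (p q : T) : Prop :=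
  exists s, [/\ cycle_through p q s, g <= size (p :: q :: s)
              & #|[set v | v \in p :: q :: s]| <= n].

(* Extended gadget of type II with p(G)=p, q(G)=q and at most n vertices.
   P1 = r :: s1 (from r to p), P2 = x :: s2 (from x to r). *)
Definition gadgetII_ext (b n : nat) (p q : T) : Prop :=
  exists r s1 x s2,
    [/\
        [/\ dipath r s1, last r s1 = p, 2 * b ^ 2 + b - 2 <= size s1,
            q \notin r :: s1 & all (fun v => a v q) (r :: s1)],
        [/\ dipath x s2, last x s2 = r, b <= size s2,
            (forall v, v \in r :: s1 -> v \in x :: s2 -> v = r)
          & q \notin x :: s2],
        (* second vertex of P1 is head r s1 (s1 is nonempty since b >= 1);
           V(P1) \ {r} = s1 since P1 is duplicate-free *)
        a x (head r s1) || has (fun v => a v x) s1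
      & #|[set v | v \in q :: (r :: s1) ++ (x :: s2)]| <= n].

End Digraphs.

(* Main.v *)
Require Import Defs.
From mathcomp Require Import all_boot zify.
Set Implicit Arguments. Unset Strict Implicit. Unset Printing Implicit Defensive.

Ltac clean := repeat match goal with H : ?P |- _ =>
  lazymatch P with
  | is_true (_ <= _) => fail
  | (_ = _ :> nat) => fail
  | _ => clear H
  end end.
Ltac clia := clean; lia.

Section S.
Variables (T : finType) (a : rel T) (g : nat).
Hypothesis hg : girth_ge a g.

Lemma chord x c v : uniq (x :: c) -> path a x c -> v \in c -> a v x -> g <= (size c).+1.
Proof.
move=> hu hp hv hvx; case/splitPr: hv hu hp => c1 c2 hu hp.
have hd : dicycle a (x :: rcons c1 v).
  rewrite /dicycle; apply/and3P; split => //.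
  - by move: hu; rewrite -cat_rcons -cat_cons cat_uniq => /and3P[].
  - rewrite /= rcons_path last_rcons hvx andbT.
    by move: hp; rewrite -cat_rcons cat_path => /andP[].
have := hg hd; rewrite /= size_rcons size_cat /=; clia.
Qed.

Lemma typeI p q X n : p != q -> a p q -> path a q X -> uniq (q :: X) -> last q X = p ->
  (size X).+1 <= n -> gadgetI a g n p q.
Proof.
move=> npq hpq; case/lastP: X => [|X v] /=.
  by move=> _ _ eqp; rewrite eqp eqxx in npq.
rewrite last_rcons => hp hu ev; subst v => hn.
have hd : cycle_through a p q X.
  rewrite /cycle_through /dicycle; apply/and3P; split => //.
  - move: hu => /andP[]; rewrite !mem_rcons rcons_uniq !inE negb_or => /andP[_ hqX] /andP[hpX hX].
    by rewrite /= !inE negb_or npq hpX hqX hX.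
  - by rewrite /=; apply/andP.
exists X; split => //; first exact: hg hd.
rewrite cardsE; apply: leq_trans (card_size _) _; move: hn; rewrite /= size_rcons; clia.
Qed.

Lemma split_last (P : pred T) x0 D : P x0 ->
  exists D1 D2, [/\ D = D1 ++ D2, P (last x0 D1) & all (predC P) D2].
Proof.
move=> hx; elim/last_ind: D => [|D v [D1 [D2 [-> h1 h2]]]].
  by exists [::], [::].
case hv: (P v).
  by exists (rcons (D1 ++ D2) v), [::]; rewrite cats0 last_rcons.
exists D1, (rcons D2 v); split => //; first by rewrite rcons_cat.
by rewrite all_rcons /= hv.
Qed.


Hypothesis hl : loopless a.
Hypothesis hyp : forall x y, a x y ->
     (exists s, cycle_through a x y s /\ size (x :: y :: s) = g) \/
     (exists z, [/\ z != x, z != y, a z x & a z y]).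

Lemma arc_neq x y : a x y -> x != y.
Proof. by move=> hxy; apply/eqP => e; move: (hl x); rewrite {2}e hxy. Qed.

Lemma step1 p q N : a p q -> forall n, n < g -> n + g <= N.+1 ->
  gadgetI a g N p q \/ exists r s, [/\ dipath a r s, last r s = p, size s = n,
     all (fun v => a v q) (r :: s) & q \notin r :: s].
Proof.
move=> hpq; have npq := arc_neq hpq.
elim=> [|n IH] hn hN.
  right; exists p, [::]; split => //=.
    by rewrite hpq.
  by rewrite inE eq_sym.
have h1 : n < g by clia.
have h2 : n + g <= N.+1 by clia.
case: (IH h1 h2) => [hI|]; first by left.
move=> [r [s [hd hls hs hall hq]]].
have arq : a r q by move: hall => /= /andP[].
move: (hd) => /andP[hurs hprs].
case: (hyp arq) => [[c [hc hsz]] | [z [hzr hzq hzr' hzq']]].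
- left; apply: (typeI (X := c ++ r :: s)) npq hpq _ _ _ _.
  + move: (hc) => /and3P[_ huc hcyc]; move: hcyc => /= /andP[_]; rewrite rcons_path => /andP[pqc lqc].
    by rewrite cat_path pqc /= lqc.
  + move: (hc) => /and3P[_ huc _].
    rewrite -cat_cons cat_uniq; apply/and3P; split => //.
    * by move: huc => /andP[].
    * apply/hasPn => v hv; rewrite inE; apply/negP => /orP[/eqP e | hvc].
        by subst v; rewrite hv in hq.
      move: hv; rewrite inE => /orP[/eqP e | hvs].
        by subst v; move: huc => /andP[]; rewrite inE hvc orbT.
      have avq : a v q by apply: (allP hall); rewrite inE hvs orbT.
      have := chord (x := q) (c := c) (v := v); move: huc => /andP[_ huc].
      move: hc => /and3P[_ _]; rewrite /= => /andP[_]; rewrite rcons_path => /andP[pqc _].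
      move=> /(_ huc pqc hvc avq); move: hsz => /= hsz; clia.
  + by rewrite last_cat.
  + move: hsz => /=; rewrite size_cat /= hs; clia.
- right; exists z, (r :: s); split => //=.
  + rewrite /dipath; apply/andP; split; last by rewrite /= hzr' hprs.
    rewrite cons_uniq hurs andbT inE negb_or hzr /=.
    apply/negP => hzs; have := chord hurs hprs hzs hzr'; rewrite hs; clia.
  + by rewrite hs.
  + by rewrite hzq'; move: hall => /= ->.
  + by rewrite inE negb_or eq_sym hzq.
Qed.


Lemma split_mem (x : T) s : x \in s -> exists A B, s = A ++ x :: B.
Proof. by case/splitPr => A B; exists A, B. Qed.

Lemma step3 b L N p q r y s1' k uk us Dd :
  a p q ->
  0 < b -> b + L + 1 <= g -> L + g + b <= N -> 2 * b ^ 2 + b - 2 <= L ->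
  dipath a r (y :: s1') -> last r (y :: s1') = p -> size (y :: s1') = L ->
  all (fun v => a v q) (r :: y :: s1') -> q \notin r :: y :: s1' ->
  dipath a uk us -> last uk us = r -> size us = k -> k < b ->
  all (fun v => a v y) (uk :: us) -> all (fun v => v \notin y :: s1') (uk :: us) ->
  q \notin uk :: us ->
  cycle_through a uk y Dd -> size (uk :: y :: Dd) = g ->
  gadgetI a g N p q \/ gadgetII_ext a b N p q.
Proof.
set s1 := y :: s1'.
move=> hpq hb0 hbLg hN hLb hd1 hl1 hs1 hall1 hq1 hd2 hl2 hs2 hkb hall2 hnot2 hq2 hC hsC.
move: (hC) => /and3P[_ huC hcyc].
move: hcyc => /= /andP[auky]; rewrite -/(path a y (rcons Dd uk)) => hpC.
have hyS : y \in q :: s1 by rewrite !inE eqxx !orbT.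
have [D1 [D2 [eD ht hD2]]] := split_last (x0 := y) Dd hyS.
set t := last y D1 in ht.
have pD2 : path a t (rcons D2 uk).
  by move: hpC; rewrite eD rcons_cat cat_path => /andP[].
have pyDd : path a y Dd by move: hpC; rewrite rcons_path => /andP[].
have uyDd : uniq (y :: Dd) by move: huC => /andP[].
have ukD2 : uk \notin D2.
  by move: huC; rewrite cons_uniq eD => /andP[]; rewrite !inE mem_cat !negb_or => /andP[_ /andP[_ ->]].
have uD2 : uniq D2.
  move: uyDd; rewrite cons_uniq => /andP[_]; rewrite eD cat_uniq => /and3P[] //.
have uD2uk : uniq (rcons D2 uk) by rewrite rcons_uniq ukD2.
have nD2 : forall v, v \in D2 -> v \notin q :: s1.
  by move=> v hv; exact: (allP hD2 v hv).
have uks1 : uk \notin s1 by move: hall2 hnot2 => _ /= /andP[].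
have uss1 : forall v, v \in us -> v \notin s1.
  by move=> v hv; apply: (allP hnot2); rewrite inE hv orbT.
have hns : forall v, v \in s1 -> v \notin rcons D2 uk.
  move=> v hv; rewrite mem_rcons inE negb_or; apply/andP; split.
    by apply/eqP => e; subst v; rewrite hv in uks1.
  by apply/negP => /nD2; rewrite inE hv orbT.
move: (hd1) => /andP[hur1 hpr1].
have us1 : uniq s1 by move: hur1 => /andP[].
have pys1' : path a y s1' by move: hpr1 => /= /andP[].
have puks1 : path a uk s1 by rewrite /= auky.
have qs1 : q \notin s1 by move: hq1; rewrite inE negb_or => /andP[].
have quk : q != uk by move: hq2; rewrite inE negb_or => /andP[].
have qD2 : q \notin D2 by apply/negP => /nD2; rewrite inE eqxx.
have hsDd : size Dd = g - 2 by move: hsC => /=; clia.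
have hsD2 : size D2 <= g - 2 by rewrite -hsDd eD size_cat leq_addl.
have ht2 : t \in q :: s1 by exact: ht.
move: ht2; rewrite inE => /orP[/eqP tq | ts1].
- left; apply: (@typeI p q (D2 ++ uk :: s1) N (arc_neq hpq) hpq).
  + by rewrite -cat_rcons cat_path -tq pD2 last_rcons.
  + have hqX : q \notin D2 ++ uk :: s1.
      by rewrite mem_cat negb_or qD2 /= in_cons negb_or quk.
    rewrite cons_uniq hqX /=.
    rewrite -cat_rcons cat_uniq uD2uk us1 andbT.
    by apply/hasPn => v /hns.
  + by rewrite last_cat.
  + rewrite size_cat /=; move: hs1 => /=; clia.
- have [A [B eS]] := split_mem ts1.
  have hY : dicycle a (t :: D2 ++ uk :: A).
    rewrite /dicycle; apply/and3P; split => //.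
    + move: us1; rewrite eS cat_uniq => /and3P[uA hAt uB].
      have htA : t \notin A by move: hAt => /hasPn /(_ t (mem_head t B)).
      have htX : t \notin D2 ++ uk :: A.
        rewrite mem_cat negb_or; apply/andP; split.
          by apply/negP => /nD2; rewrite inE ts1 orbT.
        rewrite in_cons negb_or htA andbT.
        by apply/eqP => e; rewrite -e ts1 in uks1.
      rewrite cons_uniq htX /=.
      rewrite -cat_rcons cat_uniq uD2uk uA andbT.
      apply/hasPn => v hv; apply: hns; rewrite eS mem_cat hv //.
    + rewrite /= -cat_rcons rcons_cat cat_path pD2 last_rcons /=.
      by move: puks1; rewrite eS -cat_rcons cat_path => /andP[].
  have hgY := hg hY.
  have hsA : size A < L by rewrite -hs1 -/s1 eS size_cat /=; clia.
  move: hgY; rewrite /= size_cat /= => hgY.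
  have hbD2 : b <= size D2 by clia.
  have [x [D2' eD2]] : exists x D2', D2 = x :: D2'.
    case E: D2 => [|x D2']; last by exists x, D2'.
    by move: hbD2; rewrite E leqn0 => /eqP e; rewrite e in hb0.
  subst D2.
  right; exists r, s1, x, (D2' ++ uk :: us); split.
  + split => //; first by rewrite hs1.
  + split.
    * apply/andP; split.
        rewrite -cat_cons -cat_rcons cat_uniq uD2uk.
        move: hd2 => /andP[]; rewrite cons_uniq => /andP[ukus uus] _; rewrite uus andbT.
        apply/hasPn => v hv; rewrite mem_rcons inE negb_or; apply/andP; split.
          by apply/eqP => e; subst v; rewrite hv in ukus.
        apply/negP => hvD.
        have avy : a v y by apply: (allP hall2); rewrite inE hv orbT.
        have hvDd : v \in Dd by rewrite eD mem_cat hvD orbT.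
        have := chord uyDd pyDd hvDd avy; rewrite hsDd; move: hbLg hb0; clia.
      move: pD2 => /= /andP[_]; rewrite -cat_rcons cat_path => ->; rewrite last_rcons.
      by move: hd2 => /andP[].
    * by rewrite last_cat.
    * rewrite size_cat /=; move: hbD2 => /=; clia.
    * move=> v; rewrite inE => /orP[/eqP // | hv1].
      rewrite -cat_cons mem_cat => /orP[/nD2 | hv2].
        by rewrite inE hv1 orbT.
      by move: (allP hnot2 v hv2); rewrite -/s1 hv1.
    * rewrite -cat_cons mem_cat negb_or qD2 /=; exact: hq2.
  + apply/orP; right; apply/hasP; exists t => //.
    by move: pD2 => /= /andP[].
  + rewrite cardsE; apply: leq_trans (card_size _) _.
    rewrite /= !size_cat /= size_cat /=; move: hs1 hsD2 hkb hN hs2 => /=; clia.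
Qed.


Lemma step2 b L N p q r y s1' : a p q -> 0 < b -> b < g -> 2 < g -> L.+1 < g ->
  b + L + 1 <= g -> L + g + b <= N -> 2 * b ^ 2 + b - 2 <= L ->
  dipath a r (y :: s1') -> last r (y :: s1') = p -> size (y :: s1') = L ->
  all (fun v => a v q) (r :: y :: s1') -> q \notin r :: y :: s1' ->
  forall k, k <= b -> (gadgetI a g N p q \/ gadgetII_ext a b N p q) \/
  exists uk us, [/\ dipath a uk us, last uk us = r, size us = k,
     all (fun v => a v y) (uk :: us) &
     (all (fun v => v \notin y :: s1') (uk :: us) /\ q \notin uk :: us)].
Proof.
move=> hpq hb0 hbg h2g hLg hbLg hN hLb hd1 hl1 hs1 hall1 hq1.
move: (hd1) => /andP[hur1 hpr1].
have ary : a r y by move: hpr1 => /= /andP[].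
have uy : uniq (y :: s1') by move: hur1 => /andP[].
have py : path a y s1' by move: hpr1 => /= /andP[].
have ayq : a y q by move: hall1 => /= /and3P[].
have qy : q != y by move: hq1; rewrite !in_cons !negb_or => /and3P[].
elim=> [|k IH] hk.
  right; exists r, [::]; split => //=.
  - by rewrite ary.
  - split; first by move: hur1; rewrite cons_uniq => /andP[-> _].
    by move: hq1; rewrite !in_cons !negb_or => /and3P[-> _ _].
have hk' : k <= b by clia.
case: (IH hk') => [G|[uk [us [hd2 hl2 hs2 hall2 [hnot2 hq2]]]]]; first by left.
have auky : a uk y by move: hall2 => /= /andP[].
case: (hyp auky) => [[Dd [hC hsC]] | [z [hzu hzy hzu' hzy']]].
  by left; apply: (step3 (k := k) hpq hb0 hbLg hN hLb hd1 hl1 hs1 hall1 hq1 hd2 hl2 hs2 hk hall2 hnot2 hq2 hC hsC).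
move: (hd2) => /andP[huu hpu].
right; exists z, (uk :: us); split => //=.
- rewrite /dipath; apply/andP; split; last by rewrite /= hzu' hpu.
  rewrite cons_uniq huu andbT in_cons negb_or hzu /=.
  apply/negP => hzs; have := chord huu hpu hzs hzu'; rewrite hs2; move: hk hbg; clia.
- by rewrite hs2.
- by rewrite hzy'; move: hall2 => /= ->.
- split.
    rewrite andbC; move: hnot2 => /= ->; rewrite in_cons negb_or hzy /=.
    apply/negP => hzs; have := chord uy py hzs hzy'; move: hs1 hLg => /=; clia.
  rewrite in_cons negb_or hq2 andbT.
  apply/eqP => e; subst z.
  have uyq : uniq [:: y; q] by rewrite /= inE eq_sym qy.
  have pyq : path a y [:: q] by rewrite /= ayq.
  have := chord uyq pyq (mem_head q [::]) hzy'; move: h2g => /=; clia.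
Qed.

Lemma final b p q : a p q -> 0 < b -> g = 4 * b ^ 2 ->
  gadgetI a g (2 * g) p q \/ gadgetII_ext a b (2 * g) p q.
Proof.
move=> hpq hb hgb.
have hB : b <= b ^ 2 by rewrite -{1}(expn1 b) leq_pexp2l.
set L := 2 * b ^ 2 + b - 2.
have hLg : L < g by rewrite /L; move: hgb hB hb; clia.
have hLN : L + g <= (2 * g).+1 by move: hLg; clia.
case: (step1 (N := 2 * g) hpq hLg hLN) => [G|[r [s [hd hls hs hall hq]]]]; first by left.
case: s hd hls hs hall hq => [|y s1'] hd hls hs hall hq.
  by move: hs; rewrite /L /=; move: hB hb; clia.
have hb0 : 0 < b by [].
have hbg : b < g by move: hgb hB hb; clia.
have h2g : 2 < g by move: hgb hB hb; clia.
have hLg' : L.+1 < g by rewrite /L; move: hgb hB hb; clia.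
have hbLg : b + L + 1 <= g by rewrite /L; move: hgb hB hb; clia.
have hN : L + g + b <= 2 * g by rewrite /L; move: hgb hB hb; clia.
have hLb : 2 * b ^ 2 + b - 2 <= L by [].
case: (step2 hpq hb0 hbg h2g hLg' hbLg hN hLb hd hls hs hall hq (leqnn b)) => // -[uk [us [hd2 hl2 hs2 hall2 [hnot2 hq2]]]].
right; exists r, (y :: s1'), uk, us; split.
- by split => //; rewrite hs.
- split => //; first by rewrite hs2.
  move=> v; rewrite in_cons => /orP[/eqP // | hv1] hv2.
  by move: (allP hnot2 v hv2); rewrite hv1.
- by apply/orP; left; move: hall2 => /= /andP[].
- rewrite cardsE; apply: leq_trans (card_size _) _.
  rewrite /= size_cat /= hs2; move: hs => /= hs; rewrite /L in hs *; move: hs hgb hB hb; clia.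
Qed.

End S.

Theorem lemma2p10 (b : nat) (T : finType) (a : rel T) :
  1 <= b ->
  loopless a ->
  girth_ge a (4 * b ^ 2) ->
  (forall x y, a x y ->
     (exists s, cycle_through a x y s /\ size (x :: y :: s) = 4 * b ^ 2) \/
     (exists z, [/\ z != x, z != y, a z x & a z y])) ->
  forall p q, a p q ->
    gadgetI a (4 * b ^ 2) (2 * (4 * b ^ 2)) p q \/
    gadgetII_ext a b (2 * (4 * b ^ 2)) p q.
Proof.
move=> hb hl hg hyp p q hpq.
exact: (final hg hl hyp hpq hb erefl).
Qed.
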